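(* Let $d$ be an even positive integer and $s$ a positive integer with $2s\leqslant d$. For every $\varepsilon\in I^s$, $\overline{B_\varepsilon}=B_{\bar\varepsilon}$.
   Context: Let $I=\{0,1\}$. For $x\in I^n$, its antipode is $\bar x=(1-x_1,\ldots,1-x_n)$, and for $A\subseteq I^n$, $\bar A=\{\bar x\colon x\in A\}$; $|x|=\sum_i x_i$. Let $\alpha=(0,\ldots,0)$, $\omega=(1,\ldots,1)\in I^s$. For $\varepsilon\in I^s\setminus\{\alpha,\omega\}$ let $i=t(\varepsilon)$ be the unique index with $\varepsilon_i\neq\varepsilon_{i+1}=\cdots=\varepsilon_s$, and $A_\varepsilon=\{\varepsilon_1\}\times\cdots\times\{\varepsilon_i\}\times I^{s-1-i}\subseteq I^{s-1}$. Define subsets of $I^{d-s}$: $X_0=\{x\colon |x|\leqslant \frac d2-s\}$; $X_k=\{x\colon |x|=\frac d2-s+k\}$ for $0<k<s$; $X_s=\{x\colon |x|\geqslant \frac d2\}$. For $\varepsilon\in I^s\setminus\{\alpha,\omega\}$ set $B_\varepsilon=X_{|\varepsilon|}\cap(I^{d-2s+1}\times A_\varepsilon)$ (where $I^{d-s}=I^{d-2s+1}\times I^{s-1}$), and set $B_\alpha=X_0$, $B_\omega=X_s$. *)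

(* Defs.v *)
(* Points of I^n are n.-tuple bool (coordinate i, 1-based, is nth false x (i-1)). *)
From mathcomp Require Import all_boot.
Set Implicit Arguments. Unset Strict Implicit. Unset Printing Implicit Defensive.

Definition weight (n : nat) (x : n.-tuple bool) : nat := count id x.

Definition antipode (n : nat) (x : n.-tuple bool) : n.-tuple bool := map_tuple negb x.
Definition antipode_set (n : nat) (A : {set n.-tuple bool}) : {set n.-tuple bool} :=
  [set antipode x | x in A].

Definition alpha (s : nat) : s.-tuple bool := [tuple of nseq s false].
Definition omega (s : nat) : s.-tuple bool := [tuple of nseq s true].

Definition co (s : nat) (e : s.-tuple bool) (i : nat) : bool := nth false e i.-1.

Definition is_t (s : nat) (e : s.-tuple bool) (i : nat) : bool :=
  [&& 0 < i, i < s, co e i != co e i.+1 &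
      [forall j : 'I_s.+1, (i < j) ==> (co e j == co e s)]].

(* A_e = {e_1} x ... x {e_i} x I^(s-1-i), i = t(e), subset of I^(s-1) *)
Definition Aset (s : nat) (e : s.-tuple bool) : {set (s.-1).-tuple bool} :=
  [set y : (s.-1).-tuple bool |
     [exists i : 'I_s, is_t e i &&
        [forall j : 'I_s, (0 < j <= i) ==> (nth false y j.-1 == co e j)]]].

Definition Xset (d s k : nat) : {set (d - s).-tuple bool} :=
  if k == 0 then [set x | weight x <= d./2 - s]
  else if k < s then [set x | weight x == d./2 - s + k]
  else if k == s then [set x | d./2 <= weight x]
  else set0.

(* B_e subset of I^(d-s) = I^(d-2s+1) x I^(s-1) *)
Definition Bset (d s : nat) (e : s.-tuple bool) : {set (d - s).-tuple bool} :=
  if e == alpha s then Xset d s 0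
  else if e == omega s then Xset d s s
  else Xset d s (weight e) :&:
       [set x : (d - s).-tuple bool | [exists y : (s.-1).-tuple bool,
                   (y \in Aset e) && (drop (d - 2 * s + 1) x == y :> seq bool)]].
Arguments Bset d s e : clear implicits.
Arguments Xset d s k : clear implicits.

(* Main.v *)
Require Import Defs.
From mathcomp Require Import all_boot.
From mathcomp Require Import zify.

Lemma antipodeK n (x : n.-tuple bool) : antipode (antipode x) = x.
Proof. apply: val_inj; exact: (mapK negbK). Qed.

Lemma mem_antipode_set n (A : {set n.-tuple bool}) x :
  (x \in antipode_set A) = (antipode x \in A).
Proof.
apply/imsetP/idP => [[y Hy ->]|H]; first by rewrite antipodeK.
by exists (antipode x); rewrite ?antipodeK.
Qed.

Lemma weight_antipode n (x : n.-tuple bool) : weight (antipode x) = n - weight x.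
Proof.
rewrite /weight /antipode /= count_map.
have := count_predC id x; rewrite size_tuple.
have -> : count (preim negb id) x = count (predC id) x by apply: eq_count.
lia.
Qed.

Lemma weight_le n (x : n.-tuple bool) : weight x <= n.
Proof. by rewrite /weight -{2}(size_tuple x) count_size. Qed.

Lemma weight_full n (x : n.-tuple bool) : weight x = n -> x = omega n.
Proof.
move=> H; apply: val_inj => /=.
have : all id x by rewrite all_count -[count _ _]/(weight x) H size_tuple.
have -> : all id x = all (pred1 true) x by apply: eq_all => b; case: b.
by move/all_pred1P => {1}->; rewrite size_tuple.
Qed.

Lemma antipode_omega n : antipode (omega n) = alpha n.
Proof. by apply: val_inj; rewrite /= map_nseq. Qed.
Lemma antipode_alpha n : antipode (alpha n) = omega n.
Proof. by apply: val_inj; rewrite /= map_nseq. Qed.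

Lemma antipode_eq n (x y : n.-tuple bool) : (antipode x == y) = (x == antipode y).
Proof.
apply/eqP/eqP => [<-|->]; by rewrite antipodeK.
Qed.

Lemma co_antipode s (e : s.-tuple bool) i : i.-1 < s -> co (antipode e) i = ~~ co e i.
Proof. by move=> H; rewrite /co (nth_map false) ?size_tuple. Qed.

Lemma negb_eq (a b : bool) : (~~ a == ~~ b) = (a == b).
Proof. by case: a; case: b. Qed.

Lemma is_t_antipode s (e : s.-tuple bool) i : is_t (antipode e) i = is_t e i.
Proof.
rewrite /is_t; case: (ltnP 0 i) => //= Hi; case: (ltnP i s) => //= His.
rewrite !co_antipode ?negb_eq //; try lia.
congr andb; apply: eq_forallb => j.
by rewrite !co_antipode ?negb_eq //; have := ltn_ord j; lia.
Qed.

Lemma Aset_antipode s (e : s.-tuple bool) (y : (s.-1).-tuple bool) :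
  (antipode y \in Aset (antipode e)) = (y \in Aset e).
Proof.
rewrite !inE; apply: eq_existsb => i; rewrite is_t_antipode; congr andb.
apply: eq_forallb => j; case: (boolP (0 < j <= i)) => //= Hj.
have Hi := ltn_ord i; have Hj' := ltn_ord j.
rewrite co_antipode; last lia.
by rewrite (nth_map false) ?size_tuple ?negb_eq //; lia.
Qed.

Theorem lemma3 (d s : nat) (e : s.-tuple bool) :
  0 < d -> ~~ odd d -> 0 < s -> 2 * s <= d ->
  antipode_set (Bset d s e) = Bset d s (antipode e).
Proof.
move=> Hd0 Hodd Hs Hsd.
have Hd : d = d./2 * 2 by rewrite -{1}(odd_double_half d) (negbTE Hodd) muln2.
set h := d./2 in Hd.
have Hao : (omega s == alpha s) = false.
  by apply/negbTE; case: s Hs {e Hsd} => // s' _; apply/eqP => /(congr1 val) /= [].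
apply/setP => x; rewrite mem_antipode_set /Bset antipode_eq antipode_alpha.
rewrite [antipode e == omega s]antipode_eq antipode_omega.
have Hwx := weight_le _ x.
case: (eqVneq e (alpha s)) => [->|Ha].
  rewrite eq_sym Hao /Xset eqxx (negbTE (lt0n_neq0 Hs)) ltnn eqxx !inE weight_antipode.
  rewrite -/h; apply/idP/idP; lia.
case: (eqVneq e (omega s)) => [_|Ho].
  rewrite /Xset eqxx (negbTE (lt0n_neq0 Hs)) ltnn eqxx !inE weight_antipode.
  rewrite -/h; apply/idP/idP; lia.
have Hwe : 0 < weight e < s.
  have H2 := weight_le _ e.
  have H1 : weight e != 0.
    apply/eqP => H0.
    have H0' : weight (antipode e) = s by rewrite weight_antipode H0 subn0.
    move: (weight_full _ _ H0') => /(congr1 (@antipode s)); rewrite antipodeK antipode_omega.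
    by move=> E; move: Ha; rewrite E eqxx.
  have H3 : weight e != s.
    by apply/eqP => /(weight_full _ _) E; move: Ho; rewrite E eqxx.
  lia.
rewrite !inE weight_antipode /Xset.
have -> : (s - weight e == 0) = false by apply/negbTE; lia.
have -> : (weight e == 0) = false by apply/negbTE; lia.
have -> : (s - weight e < s) by lia.
have -> : (weight e < s) by lia.
rewrite !inE weight_antipode -/h.
congr andb; first by apply/eqP/eqP; lia.
apply/existsP/existsP => [[y /andP[Hy /eqP Hdr]]|[y /andP[Hy /eqP Hdr]]].
  exists (antipode y); rewrite Aset_antipode Hy /=.
  apply/eqP; rewrite /= -Hdr /= map_drop. by rewrite (mapK negbK).
exists (antipode y); rewrite -[e]antipodeK Aset_antipode Hy /=.
by apply/eqP; rewrite /= -Hdr /= map_drop.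
Qed.
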